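(* Let $P$ be a finite atomic lattice that is ranked and whose Hasse diagram is a uniform layered graph. If $Q$ is a finite ranked poset with unique minimal element such that $Q\sim_BP$, then $Q_{\ge2}\cong P_{\ge2}$; that is, $P_{\ge2}$ is determined up to isomorphism by the doubly graded algebra $B(P)$.
   Context: A lattice is atomic if every element is a join of atoms (elements covering the minimum $\hat0$). A ranked poset has a rank function with $|x|=|y|+1$ whenever $x$ covers $y$ and $|x|=0$ iff $x$ is minimal; its Hasse diagram is the layered graph with layers $P_i=\{p:|p|=i\}$ and edges $(p,q)$ for coverings $p\gtrdot q$; $S(p)$ is the set of elements covered by $p$; $P_{\ge j}=\bigcup_{i\ge j}P_i$. The Hasse diagram is uniform if for every $p$ of rank $\ge2$ the elements of $S(p)$ form a single class under the transitive closure of $x\approx y$ iff $S(x)\cap S(y)\neq\emptyset$. For a layered graph with vertex set $V=\bigsqcup V_i$, $V_+=\bigsqcup_{i\ge1}V_i$, $B(\Gamma)=T(V_+)/R_B$ over a field $\mathbb F$, where $R_B$ is generated by $\{vw: v,w\in V_+,(v,w)\notin E\}\cup\{v\sum_{w\in S(v)}w: |v|\ge2\}$, doubly graded with $v_1\cdots v_m$ in bidegree $(m,\sum|v_i|)$. $Q\sim_BP$ means there is a doubly graded algebra isomorphism $B(P)\to B(Q)$. *)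

(* Defs.v *)
From HB Require Import structures.
From mathcomp Require Import all_boot all_order all_algebra.
Set Implicit Arguments. Unset Strict Implicit. Unset Printing Implicit Defensive.
Import Order.Theory GRing.Theory.

Local Open Scope order_scope.

Section PosetDefs.
Context {d : Order.disp_t} {T : finPOrderType d}.

Definition covers (x y : T) : bool :=
  (y < x) && [forall z : T, ~~ ((y < z) && (z < x))].

Definition minimal (x : T) : Prop := forall y : T, y <= x -> y = x.

Definition is_rank (r : T -> nat) : Prop :=
  (forall x y : T, covers x y -> r x = (r y).+1) /\
  (forall x : T, r x = 0%N <-> minimal x).

Definition unique_minimal : Prop :=
  exists x0 : T, forall x : T, minimal x <-> x = x0.

Definition Sset (p : T) : {set T} := [set q | covers p q].

Definition uniform (r : T -> nat) : Prop :=
  forall p : T, (2 <= r p)%N ->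
    forall x y : T, x \in Sset p -> y \in Sset p ->
      connect (fun a b : T => [&& a \in Sset p, b \in Sset p &
                                  (Sset a :&: Sset b != set0)]) x y.

End PosetDefs.

Definition atom {d : Order.disp_t} {L : finTBLatticeType d} (a : L) : bool :=
  covers a \bot.

Definition atomic {d : Order.disp_t} (L : finTBLatticeType d) : Prop :=
  forall x : L, x = \join_(a : L | atom a && (a <= x)) a.

Definition ge2_iso {dP dQ : Order.disp_t} (P : finPOrderType dP) (rP : P -> nat)
    (Q : finPOrderType dQ) (rQ : Q -> nat) : Prop :=
  exists f : {x : P | (2 <= rP x)%N} -> {y : Q | (2 <= rQ y)%N},
    bijective f /\ forall x y, (val x <= val y) = (val (f x) <= val (f y)).

Local Close Scope order_scope.
Local Open Scope ring_scope.

(* Tensor algebra T(X) over a field, realised on functions on words     *)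
Section TensorAlg.
Variable F : fieldType.
Variable X : finType.

Definition mono (u : seq X) : seq X -> F := fun s => (s == u)%:R.

Definition ncmul (f g : seq X -> F) : seq X -> F :=
  fun s => \sum_(i < (size s).+1) f (take i s) * g (drop i s).

Inductive ideal (Rel : (seq X -> F) -> Prop) : (seq X -> F) -> Prop :=
| ideal0 : ideal Rel (fun _ => 0)
| idealD f g : ideal Rel f -> ideal Rel g -> ideal Rel (fun s => f s + g s)
| idealZ (c : F) f : ideal Rel f -> ideal Rel (fun s => c * f s)
| idealG (u w : seq X) r : Rel r -> ideal Rel (ncmul (mono u) (ncmul r (mono w)))
| idealE f g : (forall s, f s = g s) -> ideal Rel f -> ideal Rel g.

(* elements of T(X) written as finite formal linear combinations of words *)
Definition fpoly := seq (F * seq X).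
Definition fval (p : fpoly) : seq X -> F :=
  fun s => \sum_(cw <- p) cw.1 * mono cw.2 s.

End TensorAlg.

Section Hom.
Variable F : fieldType.
Variables X Y : finType.
Variable phi : X -> seq Y -> F.

Definition homw (u : seq X) : seq Y -> F :=
  foldr (fun x acc => ncmul (phi x) acc) (mono F [::]) u.

Definition homp (p : fpoly F X) : seq Y -> F :=
  fun t => \sum_(cw <- p) cw.1 * homw cw.2 t.
End Hom.

(* B(Γ) for a layered graph with generator set X = V_+, edges E on V_+,  *)
(* and rank rk; relations  vw ((v,w) not an edge)  and  v Σ_{w∈S(v)} w  *)
(* (|v| >= 2; then S(v) ⊆ V_+).                                          *)
Definition BRel (F : fieldType) (X : finType) (E : rel X) (rk : X -> nat)
    (r : seq X -> F) : Prop :=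
  (exists v w : X, ~~ E v w /\ forall s, r s = mono F [:: v; w] s) \/
  (exists v : X, (2 <= rk v)%N /\
     forall s, r s = \sum_(w : X | E v w) mono F [:: v; w] s).

(* Since B is generated in degree 1 and the relations are in degree 2, a
   doubly graded algebra morphism is the same as an algebra morphism of
   T(X) -> T(Y) determined by images phi x of generators lying in
   T_{1,rk x}(Y), which maps the ideal into the ideal; it is an isomorphism
   iff the induced map on quotients is injective and surjective. *)
Definition graded_iso (F : fieldType) (X : finType) (E : rel X) (rk : X -> nat)
    (Y : finType) (E' : rel Y) (rk' : Y -> nat) (phi : X -> seq Y -> F) : Prop :=
  [/\ (forall (x : X) (t : seq Y), phi x t != 0 ->
          exists y : Y, t = [:: y] /\ rk' y = rk x),
      (forall p : fpoly F X, ideal (BRel E rk) (fval p) ->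
          ideal (BRel E' rk') (homp phi p)),
      (forall p : fpoly F X, ideal (BRel E' rk') (homp phi p) ->
          ideal (BRel E rk) (fval p)) &
      (forall q : fpoly F Y, exists p : fpoly F X,
          ideal (BRel E' rk') (fun t => fval q t - homp phi p t))].

Definition Vplus {d : Order.disp_t} (P : finPOrderType d) (r : P -> nat) : finType :=
  {x : P | (0 < r x)%N}.

Definition hasseE {d : Order.disp_t} (P : finPOrderType d) (r : P -> nat) :
  rel (Vplus r) := fun v w => covers (val v) (val w).

Definition hasseRk {d : Order.disp_t} (P : finPOrderType d) (r : P -> nat) :
  Vplus r -> nat := fun v => r (val v).

Arguments hasseE {d P} r _ _.
Arguments hasseRk {d P} r _.

Definition simB (F : fieldType) {dQ dP : Order.disp_t}
    (Q : finPOrderType dQ) (rQ : Q -> nat) (P : finPOrderType dP) (rP : P -> nat) : Prop :=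
  exists phi : Vplus rP -> seq (Vplus rQ) -> F,
    @graded_iso F (Vplus rP) (hasseE rP) (hasseRk rP) (Vplus rQ) (hasseE rQ) (hasseRk rQ) phi.

(* Main.v *)
Require Import Defs.
From HB Require Import structures.
From mathcomp Require Import all_boot all_order all_algebra.
From mathcomp Require Import zify.
Set Implicit Arguments. Unset Strict Implicit. Unset Printing Implicit Defensive.

Module MS1.
Import GRing.Theory.
Local Open Scope ring_scope.

Section Tens.
Variable F : fieldType.
Variable X : finType.
Implicit Types f g : seq X -> F.

Lemma ncmul_ext f f' g g' s : (forall s, f s = f' s) -> (forall s, g s = g' s) ->
  ncmul f g s = ncmul f' g' s.
Proof. by move=> hf hg; apply: eq_bigr => i _; rewrite hf hg. Qed.

Lemma low_ncmul f g a b : (forall s, (size s < a)%N -> f s = 0) ->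
  (forall s, (size s < b)%N -> g s = 0) ->
  forall s, (size s < a + b)%N -> ncmul f g s = 0.
Proof.
move=> hf hg s hs; rewrite /ncmul big1 // => i _.
have hi := ltn_ord i.
case: (ltnP i a) => ha.
  by rewrite hf ?mul0r // size_take; case: ifP; lia.
by rewrite hg ?mulr0 // size_drop; lia.
Qed.

Lemma high_ncmul f g a b : (forall s, (a < size s)%N -> f s = 0) ->
  (forall s, (b < size s)%N -> g s = 0) ->
  forall s, (a + b < size s)%N -> ncmul f g s = 0.
Proof.
move=> hf hg s hs; rewrite /ncmul big1 // => i _.
have hi := ltn_ord i.
case: (ltnP a i) => ha.
  by rewrite hf ?mul0r // size_take; case: ifP; lia.
by rewrite hg ?mulr0 // size_drop; lia.
Qed.

Lemma mono_size (u s : seq X) : size s != size u -> mono F u s = 0.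
Proof. by move=> h; rewrite /mono; case: eqP => // e; rewrite e eqxx in h. Qed.

Lemma ncmul1l g s : ncmul (mono F [::]) g s = g s.
Proof.
rewrite /ncmul big_ord_recl /= take0 drop0 /mono eqxx mul1r big1 ?addr0 // => i _.
case: s i => [|x s] i /=; first by case: i.
by rewrite mul0r.
Qed.

Lemma ncmul1r g s : ncmul g (mono F [::]) s = g s.
Proof.
rewrite /ncmul big_ord_recr /= take_size drop_size /mono eqxx mulr1 big1 ?add0r // => i _.
have : drop i s != [::].
  by rewrite -size_eq0 size_drop subn_eq0 -ltnNge ltn_ord.
by move/negbTE => ->; rewrite mulr0.
Qed.

End Tens.

End MS1.
Import MS1.

Module MS2.
Import GRing.Theory.
Local Open Scope ring_scope.

Section Id.
Variable F : fieldType.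
Variable X : finType.
Variable E : rel X.
Variable rk : X -> nat.
Implicit Types f g : seq X -> F.

Definition good2 f := (forall v w w', E v w -> E v w' -> f [::v;w] = f [::v;w']) /\
  (forall v w, E v w -> (rk v < 2)%N -> f [::v;w] = 0).

Lemma BRel_supp r : @BRel F X E rk r -> forall s, size s != 2%N -> r s = 0.
Proof.
case=> [[v [w [_ hr]]]|[v [_ hr]]] s hs; rewrite hr; first by rewrite mono_size.
by rewrite big1 // => w _; rewrite mono_size.
Qed.

Lemma BRel_good r : @BRel F X E rk r -> good2 r.
Proof.
case=> [[v0 [w0 [hn hr]]]|[v0 [h2 hr]]]; split.
- move=> v w w' e e'; rewrite !hr /mono.
  have -> : ([:: v; w] == [:: v0; w0]) = false.
    apply/negP => /eqP [e1 e2]; subst; by rewrite e in hn.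
  have -> : ([:: v; w'] == [:: v0; w0]) = false.
    apply/negP => /eqP [e1 e2]; subst; by rewrite e' in hn.
  by [].
- move=> v w e _; rewrite hr /mono.
  have -> : ([:: v; w] == [:: v0; w0]) = false.
    apply/negP => /eqP [e1 e2]; subst; by rewrite e in hn.
  by [].
- have key : forall v w, E v w -> r [:: v; w] = (v == v0)%:R.
    move=> v w e; rewrite hr.
    case: (eqVneq v v0) => [ev|ne].
      subst v; rewrite (bigD1 w) //= /mono eqxx big1 ?addr0 // => w1 /andP [_ ne1].
      by case: eqP => // [[e1]]; rewrite e1 eqxx in ne1.
    rewrite big1 // => w1 _; rewrite /mono; case: eqP => // [[e1 _]].
    by rewrite e1 eqxx in ne.
  by move=> v w w' e e'; rewrite !key.
- move=> v w e hv; rewrite hr big1 // => w1 _; rewrite /mono.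
  case: eqP => // [[e1 _]]; subst; lia.
Qed.

Lemma ideal_char f : ideal (@BRel F X E rk) f ->
  (forall s, (size s < 2)%N -> f s = 0) /\ good2 f.
Proof.
elim=> {f}.
- by split => //; split.
- move=> f g _ [lf [gf1 gf2]] _ [lg [gg1 gg2]]; split.
    by move=> s hs; rewrite lf ?lg ?addr0.
  split; first by move=> v w w' e e'; rewrite (gf1 _ _ _ e e') (gg1 _ _ _ e e').
  by move=> v w e h; rewrite gf2 ?gg2 ?addr0.
- move=> c f _ [lf [gf1 gf2]]; split; first by move=> s hs; rewrite lf ?mulr0.
  split; first by move=> v w w' e e'; rewrite (gf1 _ _ _ e e').
  by move=> v w e h; rewrite gf2 ?mulr0.
- move=> u w r hr.
  have [hu|hu] := eqVneq (u ++ w) [::].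
    have [-> ->] : u = [::] /\ w = [::] by case: u hu => //; case: w.
    have eqr : forall s, ncmul (mono F [::]) (ncmul r (mono F [::])) s = r s.
      by move=> s; rewrite ncmul1l ncmul1r.
    split; first by move=> s hs; rewrite eqr BRel_supp //; case: s hs => // ? [].
    have [g1 g2] := BRel_good hr.
    split; first by move=> v w1 w' e e'; rewrite !eqr; apply: g1.
    by move=> v w1 e h; rewrite eqr; apply: g2.
  have low : forall s, (size s < 3)%N -> ncmul (mono F u) (ncmul r (mono F w)) s = 0.
    move=> s hs; apply: (@low_ncmul _ _ _ _ (size u) (2 + size w)%N).
    - by move=> t ht; rewrite mono_size //; apply/negP => /eqP e; lia.
    - apply: low_ncmul.
        by move=> t ht; rewrite BRel_supp //; apply/negP => /eqP e; lia.
      by move=> t ht; rewrite mono_size //; apply/negP => /eqP e; lia.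
    have : size (u ++ w) != 0%N by rewrite size_eq0.
    rewrite size_cat; lia.
  split; first by move=> s hs; rewrite low //; lia.
  by split; [move=> *; rewrite !low | move=> *; rewrite low].
- move=> f g hfg _ [lf [gf1 gf2]]; split; first by move=> s hs; rewrite -hfg lf.
  split; first by move=> v w w' e e'; rewrite -!hfg (gf1 _ _ _ e e').
  by move=> v w e h; rewrite -hfg gf2.
Qed.

Lemma ideal_sum (I : Type) (r : seq I) (P : pred I) (G : I -> seq X -> F) :
  (forall i, P i -> ideal (@BRel F X E rk) (G i)) ->
  ideal (@BRel F X E rk) (fun s => \sum_(i <- r | P i) G i s).
Proof.
move=> h; elim: r => [|i r IH].
  by apply: (idealE (f := fun _ => 0)) (ideal0 _) => s; rewrite big_nil.
case Pi: (P i).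
  apply: (idealE (f := fun s => G i s + \sum_(j <- r | P j) G j s)).
    by move=> s; rewrite big_cons Pi.
  by apply: idealD => //; apply: h.
by apply: idealE IH => s; rewrite big_cons Pi.
Qed.

Lemma ideal_rel r : @BRel F X E rk r -> ideal (@BRel F X E rk) r.
Proof.
move=> hr; apply: (idealE (f := ncmul (mono F [::]) (ncmul r (mono F [::])))).
  by move=> s; rewrite ncmul1l ncmul1r.
exact: idealG.
Qed.

Lemma mono2 (v w a b : X) : mono F [:: v; w] [:: a; b] = ((v == a) && (w == b))%:R.
Proof.
by rewrite /mono !eqseq_cons andbT (eq_sym a) (eq_sym b).
Qed.

Lemma good2_ideal f : (forall s, size s != 2%N -> f s = 0) -> good2 f ->
  ideal (@BRel F X E rk) f.
Proof.
move=> hs [g1 g2].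
pose h v s := \sum_(w : X) f [:: v; w] * mono F [:: v; w] s.
apply: (idealE (f := fun s => \sum_(v : X) h v s)).
  move=> s; case: s hs => [|a [|b [|c s]]] hs.
  - rewrite hs // big1 // => v _; rewrite /h big1 // => w _; by rewrite mono_size ?mulr0.
  - rewrite hs // big1 // => v _; rewrite /h big1 // => w _; by rewrite mono_size ?mulr0.
  - rewrite (bigD1 a) //= big1 ?addr0.
      rewrite /h (bigD1 b) //= mono2 !eqxx mulr1 big1 ?addr0 //.
      by move=> w hw; rewrite mono2 eqxx (negbTE hw) mulr0.
    move=> v hv; rewrite /h big1 // => w _; by rewrite mono2 (negbTE hv) mulr0.
  - rewrite hs // big1 // => v _; rewrite /h big1 // => w _; by rewrite mono_size ?mulr0.
apply: ideal_sum => v _.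
apply: (idealE (f := fun s => \sum_(w | ~~ E v w) f [:: v; w] * mono F [:: v; w] s
                          + \sum_(w | E v w) f [:: v; w] * mono F [:: v; w] s)).
  by move=> s; rewrite /h [RHS](bigID (E v)) addrC.
apply: idealD.
  apply: ideal_sum => w hw; apply: idealZ; apply: ideal_rel; left.
  by exists v, w.
case: (ltnP (rk v) 2) => hv.
  apply: (idealE (f := fun _ => 0)) (ideal0 _) => s.
  by rewrite big1 // => w e; rewrite g2 ?mul0r.
case: (pickP (E v)) => [w0 e0|none]; last first.
  apply: (idealE (f := fun _ => 0)) (ideal0 _) => s.
  by rewrite big_pred0.
apply: (idealE (f := fun s => f [:: v; w0] * \sum_(w | E v w) mono F [:: v; w] s)).
  move=> s; rewrite mulr_sumr; apply: eq_bigr => w e.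
  by rewrite (g1 _ _ _ e0 e).
apply: idealZ; apply: ideal_rel; right; exists v; split => //.
Qed.

End Id.

End MS2.
Import MS2.

Module MS3.
Import GRing.Theory.
Local Open Scope ring_scope.

Section Lin.
Variable F : fieldType.
Variables X Y : finType.
Variables (EX : rel X) (rkX : X -> nat) (EY : rel Y) (rkY : Y -> nat).
Variable phi : X -> seq Y -> F.
Hypothesis GI : graded_iso EX rkX EY rkY phi.

Definition M x y := phi x [:: y].
Definition Mv (a : X -> F) y := \sum_x a x * M x y.

Definition G2 (Z : finType) (E : rel Z) (rk : Z -> nat) (a b : Z -> F) :=
  (forall v w w', E v w -> E v w' -> a v * b w = a v * b w') /\
  (forall v w, E v w -> (rk v < 2)%N -> a v * b w = 0).

Definition p1 (a : X -> F) : fpoly F X := [seq (a x, [:: x]) | x <- index_enum X].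
Definition p2 (a b : X -> F) : fpoly F X :=
  [seq (a xy.1 * b xy.2, [:: xy.1; xy.2]) | xy <- [seq (x, y) | x <- index_enum X, y <- index_enum X]].

Lemma phi_supp x t : size t != 1%N -> phi x t = 0.
Proof.
move=> h; case: GI => h1 _ _ _.
apply/eqP; apply: contraR h => /h1 [y [-> _]]; by [].
Qed.

Lemma M_rank x y : M x y != 0 -> rkY y = rkX x.
Proof. case: GI => h1 _ _ _ /h1 [y0 [[->] ->]]; by []. Qed.

Lemma homw_nil w : homw phi w [::] = (w == [::])%:R.
Proof.
case: w => [|x w] //=.
by rewrite /ncmul big_ord_recl big_ord0 addr0 phi_supp // mul0r.
Qed.

Lemma homw_cons x w : homw phi (x :: w) = ncmul (phi x) (homw phi w).
Proof. by []. Qed.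

Lemma homw_one w y : homw phi w [:: y] = \sum_x (w == [:: x])%:R * M x y.
Proof.
case: w => [|x [|x' w]].
- rewrite /= /mono big1 // => x _; by rewrite mul0r.
- rewrite /= /ncmul !big_ord_recl big_ord0 /= addr0 phi_supp // mul0r add0r.
  rewrite /mono eqxx mulr1 (bigD1 x) //= eqxx mul1r big1 ?addr0 // => z hz.
  by rewrite eqseq_cons andbT eq_sym (negbTE hz) mul0r.
- have -> : \sum_x0 ([:: x, x' & w] == [:: x0])%:R * M x0 y = 0.
    by apply: big1 => z _; rewrite eqseq_cons /= andbF mul0r.
  rewrite homw_cons /ncmul big1 // => -[[|[|i]] hi] _ //.
  + by rewrite /= phi_supp ?mul0r.
  + by rewrite (_ : drop _ _ = [::]) // homw_nil mulr0.
Qed.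

Lemma homw1 x s : homw phi [:: x] s = phi x s.
Proof. by rewrite /= ncmul1r. Qed.

Lemma homw2_eq x1 x2 s : homw phi [:: x1; x2] s = ncmul (phi x1) (phi x2) s.
Proof. by apply: ncmul_ext => // t; rewrite ncmul1r. Qed.

Lemma homw2_val x1 x2 y1 y2 : homw phi [:: x1; x2] [:: y1; y2] = M x1 y1 * M x2 y2.
Proof.
rewrite homw2_eq /ncmul !big_ord_recl big_ord0 /= addr0.
by rewrite (phi_supp x1 (t := [::])) // mul0r add0r (phi_supp x2 (t := [::])) // mulr0 addr0.
Qed.

Lemma homw2_supp x1 x2 s : size s != 2%N -> homw phi [:: x1; x2] s = 0.
Proof.
move=> hs; rewrite homw2_eq.
case: (ltnP (size s) 2) => h.
  apply: (@low_ncmul _ _ _ _ 1 1) => // t ht; apply: phi_supp; lia.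
apply: (@high_ncmul _ _ _ _ 1 1) => //; last lia.
  by move=> t ht; apply: phi_supp; lia.
by move=> t ht; apply: phi_supp; lia.
Qed.

Lemma fval_p2 a b s : fval (p2 a b) s = \sum_x \sum_y a x * b y * mono F [:: x; y] s.
Proof. by rewrite /fval /p2 big_map big_allpairs. Qed.

Lemma homp_p2 a b s : homp phi (p2 a b) s = \sum_x \sum_y a x * b y * homw phi [:: x; y] s.
Proof. by rewrite /homp /p2 big_map big_allpairs. Qed.

Lemma mono2M (Z : finType) (v w a b : Z) :
  mono F [:: v; w] [:: a; b] = (v == a)%:R * (w == b)%:R.
Proof. by rewrite mono2; case: (v == a); case: (w == b); rewrite ?mul0r ?mul1r. Qed.

Lemma sum1_pick (Z : finType) (c : Z -> F) w : \sum_y c y * (y == w)%:R = c w.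
Proof.
rewrite (bigD1 w) //= eqxx mulr1 big1 ?addr0 // => y hy.
by rewrite (negbTE hy) mulr0.
Qed.

Lemma fval_p2_val a b v w : fval (p2 a b) [:: v; w] = a v * b w.
Proof.
rewrite fval_p2.
under eq_bigr => x _ do under eq_bigr => y _ do rewrite mono2M mulrA.
under eq_bigr => x _ do rewrite sum1_pick.
by rewrite sum1_pick.
Qed.

Lemma fval_p2_supp a b s : size s != 2%N -> fval (p2 a b) s = 0.
Proof.
move=> hs; rewrite fval_p2 big1 // => x _; rewrite big1 // => y _.
by rewrite mono_size ?mulr0.
Qed.

Lemma homp_p2_val a b y1 y2 : homp phi (p2 a b) [:: y1; y2] = Mv a y1 * Mv b y2.
Proof.
rewrite homp_p2 /Mv mulr_suml; apply: eq_bigr => x _.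
rewrite mulr_sumr; apply: eq_bigr => y _; rewrite homw2_val.
by rewrite -!mulrA; congr (_ * _); rewrite mulrCA.
Qed.

Lemma homp_p2_supp a b s : size s != 2%N -> homp phi (p2 a b) s = 0.
Proof.
move=> hs; rewrite homp_p2 big1 // => x _; rewrite big1 // => y _.
by rewrite homw2_supp ?mulr0.
Qed.

Lemma good2_G2 (Z : finType) (E : rel Z) (rk : Z -> nat) (f : seq Z -> F) a b :
  (forall v w, f [:: v; w] = a v * b w) -> (good2 E rk f <-> G2 E rk a b).
Proof.
move=> hf; rewrite /good2 /G2; split => [[g1 g2]|[g1 g2]]; split.
- by move=> v w w' e e'; rewrite -!hf; apply: g1.
- by move=> v w e h; rewrite -hf; apply: g2.
- by move=> v w w' e e'; rewrite !hf; apply: g1.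
- by move=> v w e h; rewrite hf; apply: g2.
Qed.

Lemma T1 a b : G2 EX rkX a b -> G2 EY rkY (Mv a) (Mv b).
Proof.
move=> h.
have id1 : ideal (@BRel F X EX rkX) (fval (p2 a b)).
  apply: good2_ideal; first by move=> s; apply: fval_p2_supp.
  by apply/(good2_G2 _ _ (fval_p2_val a b)).
case: GI => _ h2 _ _.
have [_ g] := ideal_char (h2 _ id1).
by apply/(good2_G2 _ _ (homp_p2_val a b)).
Qed.

Lemma T2 a b : G2 EY rkY (Mv a) (Mv b) -> G2 EX rkX a b.
Proof.
move=> h.
have id1 : ideal (@BRel F Y EY rkY) (homp phi (p2 a b)).
  apply: good2_ideal; first by move=> s; apply: homp_p2_supp.
  by apply/(good2_G2 _ _ (homp_p2_val a b)).
case: GI => _ _ h3 _.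
have [_ g] := ideal_char (h3 _ id1).
by apply/(good2_G2 _ _ (fval_p2_val a b)).
Qed.

Lemma Msurj u : exists a, forall y, Mv a y = (y == u)%:R.
Proof.
case: GI => _ _ _ h4.
have [p hp] := h4 [:: (1, [:: u])].
have [l _] := ideal_char hp.
exists (fun x => \sum_(cw <- p) cw.1 * (cw.2 == [:: x])%:R) => y.
have := l [:: y] isT.
rewrite /fval big_cons big_nil addr0 mul1r /mono /homp.
move/eqP; rewrite subr_eq0 /= eqseq_cons andbT eq_sym => /eqP <-.
rewrite /Mv.
rewrite (eq_bigr (fun x => \sum_(cw <- p) cw.1 * (cw.2 == [:: x])%:R * M x y)); last first.
  by move=> x _; rewrite mulr_suml.
rewrite exchange_big /=; apply: eq_bigr => cw _.
rewrite homw_one mulr_sumr; apply: eq_bigr => x _; by rewrite mulrA.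
Qed.

Lemma Minj a : (forall y, Mv a y = 0) -> forall x, a x = 0.
Proof.
move=> h.
case: GI => _ _ h3 _.
have id1 : ideal (@BRel F Y EY rkY) (homp phi (p1 a)).
  apply: (idealE (f := fun _ => 0)) (ideal0 _) => s.
  rewrite /homp /p1 big_map.
  case: s => [|y [|y' s]].
  - by rewrite big1 // => x _; rewrite homw1 phi_supp ?mulr0.
  - by rewrite -[LHS](h y) /Mv; apply: eq_bigr => x _; rewrite homw1.
  - by rewrite big1 // => x _; rewrite homw1 phi_supp ?mulr0.
have [l _] := ideal_char (h3 _ id1).
move=> x; have := l [:: x] isT.
rewrite /fval /p1 big_map (bigD1 x) //= /mono eqxx mulr1 big1 ?addr0 // => z hz.
by rewrite eqseq_cons andbT eq_sym (negbTE hz) mulr0.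
Qed.

End Lin.

End MS3.
Import MS3.

Module MS4.
Import GRing.Theory.
Local Open Scope ring_scope.

Section Main.
Variable F : fieldType.
Variables X Y : finType.
Variables (EX : rel X) (rkX : X -> nat) (EY : rel Y) (rkY : Y -> nat).
Variable phi : X -> seq Y -> F.
Hypothesis GI : graded_iso EX rkX EY rkY phi.
Hypothesis HA : forall v, (2 <= rkX v)%N -> exists w1 w2, [/\ w1 != w2, EX v w1 & EX v w2].
Hypothesis HB : forall v v' w1 w2, w1 != w2 -> EX v w1 -> EX v w2 -> EX v' w1 -> EX v' w2 -> v = v'.
Hypothesis HCX : forall v w, EX v w -> rkX v = (rkX w).+1.
Hypothesis HCY : forall v w, EY v w -> rkY v = (rkY w).+1.

Definition e (Z : finType) (z : Z) : Z -> F := fun t => (t == z)%:R.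

Local Notation M := (M phi).
Local Notation Mv := (Mv phi).

Lemma Mv_e v y : Mv (e v) y = M v y.
Proof.
rewrite /Mv (bigD1 v) //= /e eqxx mul1r big1 ?addr0 // => x hx.
by rewrite (negbTE hx) mul0r.
Qed.

Lemma e_neq (Z : finType) (z t : Z) : t != z -> e z t = 0.
Proof. by rewrite /e => /negbTE ->. Qed.

Lemma e_eq (Z : finType) (z : Z) : e z z = 1.
Proof. by rewrite /e eqxx. Qed.


Lemma other v w : (2 <= rkX v)%N -> exists w', EX v w' /\ w' != w.
Proof.
move=> /HA [w1 [w2 [ne e1 e2]]].
case: (eqVneq w1 w) => [E1|n1]; last by exists w1.
exists w2; split => //; by rewrite -E1 eq_sym.
Qed.

Lemma G2_single v w : (2 <= rkX v)%N -> ~~ EX v w -> G2 EX rkX (e v) (e w).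
Proof.
move=> hv hn; split.
- move=> z w1 w2 e1 e2; case: (eqVneq z v) => [ez|nz]; last by rewrite e_neq ?mul0r.
  subst z; rewrite (e_neq (z := w) (t := w1)) ?(e_neq (z := w) (t := w2)) //.
    by apply/negP => /eqP E; subst; rewrite e2 in hn.
  by apply/negP => /eqP E; subst; rewrite e1 in hn.
- move=> z w1 e1 hz; case: (eqVneq z v) => [ez|nz]; last by rewrite e_neq ?mul0r.
  subst; lia.
Qed.

Lemma M_mono v0 : (2 <= rkX v0)%N ->
  exists u c, c != 0 /\ forall y, M v0 y = c * (y == u)%:R.
Proof.
move=> hk; set k := rkX v0.
have mnz : exists u1, M v0 u1 != 0.
  case: (pickP (fun y => M v0 y != 0)) => [u1 h|none]; first by exists u1.
  exfalso; have := oner_neq0 F; rewrite -(e_eq v0) (Minj GI (a := e v0)) ?eqxx //.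
  by move=> y; rewrite Mv_e; apply/eqP; exact: negbFE (none y).
case: mnz => u1 hu1.
have rku1 : rkY u1 = k := M_rank GI hu1.
have [a ha] := Msurj GI u1.
pose a' x := if rkX x == k then a x else 0.
have ha' : forall y, Mv a' y = (y == u1)%:R.
  move=> y; case: (eqVneq (rkY y) k) => [ry|ry].
    rewrite -ha /Mv; apply: eq_bigr => x _; rewrite /a'.
    case: eqP => // hx; rewrite mul0r.
    case: (eqVneq (M x y) 0) => [->|hM]; first by rewrite mulr0.
    by have := M_rank GI hM; rewrite ry => E; rewrite E in hx.
  have -> : (y == u1) = false by apply/negP => /eqP E; subst; rewrite rku1 eqxx in ry.
  rewrite /Mv big1 // => x _; rewrite /a'; case: eqP => hx; last by rewrite mul0r.
  case: (eqVneq (M x y) 0) => [->|hM]; first by rewrite mulr0.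
  by have := M_rank GI hM; rewrite hx => E; rewrite E eqxx in ry.
have key : forall v, v != v0 -> a' v = 0.
  move=> v nv; rewrite /a'; case: eqP => // rv.
  have hv2 : (2 <= rkX v)%N by rewrite rv.
  have [w1 [w2 [ne e1 e2]]] := HA hv2.
  have [w [w' [ew ew' nw nS]]] : exists w w', [/\ EX v w, EX v w', w' != w & ~~ EX v0 w].
    case E1: (EX v0 w1); last by exists w1, w2; split; rewrite ?E1 // eq_sym.
    case E2: (EX v0 w2); last by exists w2, w1; split; rewrite ?E2.
    by have := HB ne e1 e2 E1 E2; move=> E; rewrite E eqxx in nv.
  have G1 := T1 GI (G2_single hk nS).
  have G2' : G2 EY rkY (Mv a') (Mv (e w)).
    split.
    - move=> z y1 y2 ez1 ez2; rewrite !ha'.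
      case: (eqVneq z u1) => [E|nz]; last by rewrite !mul0r.
      subst z; rewrite !mul1r.
      have [g1 _] := G1.
      have := g1 _ _ _ ez1 ez2; rewrite !Mv_e => H.
      by apply: (mulfI hu1).
    - move=> z y1 ez hz; rewrite ha'; case: (eqVneq z u1) => [E|nz]; last by rewrite mul0r.
      subst; lia.
  have [g1 _] := T2 GI G2'.
  have := g1 _ _ _ ew ew'; rewrite e_eq e_neq // mulr1 mulr0 /a'; by rewrite rv eqxx.
have sumE : forall y, Mv a' y = a' v0 * M v0 y.
  move=> y; rewrite /Mv (bigD1 v0) //= big1 ?addr0 // => x hx.
  by rewrite key ?mul0r.
have hav : a' v0 != 0.
  apply/eqP => E; have := ha' u1; rewrite sumE E mul0r eqxx => /eqP.
  by rewrite eq_sym oner_eq0.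
exists u1, (a' v0)^-1; split; first by rewrite invr_eq0.
by move=> y; rewrite -ha' sumE mulKf.
Qed.

Lemma M_val v u : (2 <= rkX v)%N -> M v u != 0 ->
  exists c, c != 0 /\ forall y, M v y = c * (y == u)%:R.
Proof.
move=> hv hu; have [u1 [c [cn hc]]] := M_mono hv.
have E : u = u1.
  by apply/eqP; apply: contraR hu => n; rewrite hc (negbTE n) mulr0.
by subst; exists c.
Qed.

Lemma M_inj_pair v v' u : (2 <= rkX v)%N -> (2 <= rkX v')%N ->
  M v u != 0 -> M v' u != 0 -> v = v'.
Proof.
move=> hv hv' h h'.
have [c [cn hc]] := M_val hv h.
have [c' [cn' hc']] := M_val hv' h'.
case: (eqVneq v v') => // nvv; exfalso.
pose a := fun x => c' * e v x - c * e v' x.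
have H : forall y, Mv a y = 0.
  move=> y; rewrite /Mv.
  rewrite (eq_bigr (fun x => c' * (e v x * M x y) - c * (e v' x * M x y))); last first.
    by move=> x _; rewrite /a mulrBl !mulrA.
  rewrite sumrB -!mulr_sumr -!/(Mv _ _) !Mv_e hc hc'.
  by rewrite mulrCA subrr.
have := Minj GI H v; rewrite /a e_eq e_neq // mulr1 mulr0 subr0 => /eqP.
by rewrite (negbTE cn').
Qed.

Lemma M_hit u : exists v, M v u != 0.
Proof.
have [a ha] := Msurj GI u.
case: (pickP (fun v => M v u != 0)) => [v hv|none]; first by exists v.
exfalso; have := ha u; rewrite eqxx /Mv big1 => [|x _].
  by move/eqP; rewrite eq_sym oner_eq0.
by move: (none x) => /negbFE /eqP ->; rewrite mulr0.
Qed.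

Lemma cover_fw v w u u' : (2 <= rkX v)%N -> (2 <= rkX w)%N ->
  M v u != 0 -> M w u' != 0 -> EX v w -> EY u u'.
Proof.
move=> hv hw h h' E; apply/negP => nE.
have [c [cn hc]] := M_val hv h.
have [d [dn hd]] := M_val hw h'.
have G : G2 EY rkY (Mv (e v)) (Mv (e w)).
  split.
  - move=> z y1 y2 ez1 ez2; rewrite !Mv_e !hc !hd.
    case: (eqVneq z u) => [Ez|nz]; last by rewrite !mulr0 !mul0r.
    subst z.
    have -> : (y1 == u') = false by apply/negP => /eqP Ey; subst; rewrite ez1 in nE.
    have -> : (y2 == u') = false by apply/negP => /eqP Ey; subst; rewrite ez2 in nE.
    by [].
  - move=> z y1 ez hz; rewrite !Mv_e !hc.
    case: (eqVneq z u) => [Ez|nz]; last by rewrite !mulr0 !mul0r.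
    subst z; have := M_rank GI h; lia.
have [g1 _] := T2 GI G.
have [w' [ew' nw]] := other w hv.
have := g1 _ _ _ E ew'; rewrite !e_eq e_neq // mulr1 mulr0 => /eqP.
by rewrite oner_eq0.
Qed.

Lemma cover_bw v w u u' : (2 <= rkX v)%N -> (2 <= rkX w)%N ->
  M v u != 0 -> M w u' != 0 -> EY u u' -> EX v w.
Proof.
move=> hv hw h h' E; apply: contraT => nE.
have [g1 _] := T1 GI (G2_single hv nE).
have r1 := M_rank GI h; have r2 := M_rank GI h'; have r3 := HCY E.
have [w'' [ew'' nw]] := other w hv.
have r4 := HCX ew''.
have hw'' : (2 <= rkX w'')%N by lia.
have [u'' [d'' [dn hd]]] := M_mono hw''.
have h'' : M w'' u'' != 0 by rewrite hd eqxx mulr1.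
have E'' := cover_fw hv hw'' h h'' ew''.
have nu : u'' != u'.
  by apply/negP => /eqP Eu; subst; rewrite (M_inj_pair hw'' hw h'' h') eqxx in nw.
have [d [_ hdw]] := M_val hw h'.
have := g1 _ _ _ E E''; rewrite !Mv_e (hdw u'') (negbTE nu) mulr0 mulr0 => /eqP.
by rewrite mulf_eq0 (negbTE h) (negbTE h').
Qed.

End Main.

End MS4.
Import MS4.

Module MS5.
Import Order.Theory.
Local Open Scope order_scope.

Section Pos.
Context {d : Order.disp_t} {T : finPOrderType d}.

Lemma below_cover (z v : T) : z < v -> exists c, covers v c /\ z <= c.
Proof.
have H : forall n (z : T), (#|[set t | ((z < t) && (t < v))%O]| < n)%N -> z < v ->
    exists c, covers v c /\ z <= c.
  elim=> // n IH z' hn hz.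
  case: (pickP (fun t => (z' < t) && (t < v))) => [t /andP [zt tv]|none].
    suff hc : (#|[set t0 | ((t < t0) && (t0 < v))%O]| < n)%N.
      have [c [cv tc]] := IH t hc tv; exists c; split => //; exact: le_trans (ltW zt) tc.
    suff hp : [set t0 | ((t < t0) && (t0 < v))%O] \proper [set t | ((z' < t) && (t < v))%O].
      by rewrite ltnS in hn; exact: leq_trans (proper_card hp) hn.
    apply/properP; split.
      apply/subsetP => t'; rewrite !inE => /andP [tt' t'v].
      by rewrite (lt_trans zt tt') t'v.
    by exists t; rewrite !inE ?zt ?tv ?ltxx.
  exists z'; split => //; apply/andP; split => //; apply/forallP => t; by rewrite none.
by move=> hz; apply: (H _ z (ltnSn _) hz).
Qed.

Variable r : T -> nat.
Hypothesis hr : forall x y : T, covers x y -> r x = (r y).+1.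

Lemma rank_le (x y : T) : x <= y -> (r x <= r y)%N.
Proof.
have H : forall n y, (r y <= n)%N -> x <= y -> (r x <= r y)%N.
  elim=> [|n IH] y' hy hxy.
    case: (eqVneq x y') => [->//|ne].
    have hlt : x < y' by rewrite lt_neqAle ne hxy.
    have [c [cv _]] := below_cover hlt.
    by have := hr cv; lia.
  case: (eqVneq x y') => [->//|ne].
  have hlt : x < y' by rewrite lt_neqAle ne hxy.
  have [c [cv xc]] := below_cover hlt.
  have := hr cv => E.
  have := IH c ltac:(lia) xc; lia.
by move=> hxy; apply: (H _ y (leqnn _) hxy).
Qed.

End Pos.

End MS5.
Import MS5.

Module MS6.
Import Order.Theory.
Local Open Scope order_scope.

Section Tr.
Context {dP dQ : Order.disp_t} {P : finPOrderType dP} {Q : finPOrderType dQ}.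
Variables (rP : P -> nat) (rQ : Q -> nat).
Hypothesis hrP : forall x y : P, covers x y -> rP x = (rP y).+1.
Variable f : {x : P | (2 <= rP x)%N} -> {y : Q | (2 <= rQ y)%N}.
Hypothesis fc : forall x y, covers (val x) (val y) -> covers (val (f x)) (val (f y)).

Lemma ord_mono x y : val x <= val y -> val (f x) <= val (f y).
Proof.
have H : forall n y, (rP (val y) <= n)%N -> val x <= val y -> val (f x) <= val (f y).
  elim=> [|n IH] y' hy hxy.
    by have := valP y'; lia.
  case: (eqVneq (val x) (val y')) => [E|ne].
    by rewrite (val_inj E).
  have hlt : val x < val y' by rewrite lt_neqAle ne hxy.
  have [c [cv xc]] := below_cover hlt.
  have E := hrP cv.
  have rc : (2 <= rP c)%N by have := rank_le hrP xc; have := valP x; lia.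
  pose c' : {x : P | (2 <= rP x)%N} := exist _ c rc.
  have := IH c' ltac:(rewrite /=; lia) xc.
  have /andP [lt _] := fc (x := y') (y := c') cv.
  move=> le1; exact: le_trans le1 (ltW lt).
by move=> hxy; apply: (H _ y (leqnn _) hxy).
Qed.
End Tr.

Section Lat.
Context {d : Order.disp_t} {P : finTBLatticeType d}.

Lemma lattice_uniq (v v' w1 w2 : P) : w1 != w2 -> covers v w1 -> covers v w2 ->
  covers v' w1 -> covers v' w2 -> v = v'.
Proof.
move=> ne c1 c2 c1' c2'.
have key : forall u : P, covers u w1 -> covers u w2 -> u = w1 `|` w2.
  move=> u /andP [l1 /forallP n1] /andP [l2 /forallP n2].
  have hj : w1 `|` w2 <= u by rewrite leUx (ltW l1) (ltW l2).
  have h1 : w1 < w1 `|` w2.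
    rewrite lt_neqAle leUl andbT; apply/eqP => E.
    have h21 : w2 <= w1 by rewrite E leUr.
    move: h21; rewrite le_eqVlt; case/orP => [/eqP E2|lt21]; first by rewrite E2 eqxx in ne.
    by have := n2 w1; rewrite lt21 l1.
  apply/eqP; rewrite eq_le hj andbT.
  move: hj; rewrite [_ <= u]le_eqVlt; case/orP; first by move/eqP => ->.
  by move=> ltj; have := n1 (w1 `|` w2); rewrite h1 ltj.
by rewrite (key _ c1 c2) (key _ c1' c2').
Qed.

Variable rP : P -> nat.
Hypothesis hr : is_rank rP.
Hypothesis hat : atomic P.

Lemma two_covers x : (2 <= rP x)%N ->
  exists w1 w2, [/\ w1 != w2, covers x w1 & covers x w2].
Proof.
move=> hx.
have rb : rP \bot = 0%N.
  by apply/hr.2 => y; rewrite lex0 => /eqP.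
have hb : \bot < x.
  rewrite lt_neqAle le0x andbT; apply/eqP => E; rewrite -E rb in hx; lia.
have [c [cc _]] := below_cover hb.
case: (pickP (fun w => covers x w && (w != c))) => [w /andP [cw ne]|none].
  by exists w, c.
exfalso.
have hle : x <= c.
  rewrite [x]hat; apply/joinsP => a /andP [ha hax].
  have ra : rP a = 1%N by rewrite (hr.1 _ _ ha) rb.
  have hlt : a < x by rewrite lt_neqAle hax andbT; apply/eqP => E; rewrite E in ra; lia.
  have [c' [cc' ac']] := below_cover hlt.
  have : c' == c by move: (none c'); rewrite cc' /= => /negbFE.
  by move/eqP => <-.
have /andP [lt _] := cc.
by have := lt_le_trans lt hle; rewrite ltxx.
Qed.
End Lat.

End MS6.
Import MS6.

Theorem mainTheorem16 (F : fieldType)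
    (dP : Order.disp_t) (P : finTBLatticeType dP) (rP : P -> nat)
    (dQ : Order.disp_t) (Q : finPOrderType dQ) (rQ : Q -> nat) :
  atomic P -> is_rank rP -> uniform rP ->
  is_rank rQ -> @unique_minimal _ Q ->
  simB F rQ rP ->
  ge2_iso rP rQ.
Proof.
move=> hat hrP _ hrQ _ [phi GI].
have HA : forall v : Vplus rP, (2 <= hasseRk rP v)%N ->
    exists w1 w2, [/\ w1 != w2, hasseE rP v w1 & hasseE rP v w2].
  move=> v hv; have [w1 [w2 [ne c1 c2]]] := two_covers hrP hat hv.
  have p1 : (0 < rP w1)%N by have := hrP.1 _ _ c1; rewrite /hasseRk in hv; lia.
  have p2 : (0 < rP w2)%N by have := hrP.1 _ _ c2; rewrite /hasseRk in hv; lia.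
  by exists (exist _ w1 p1), (exist _ w2 p2); split.
have HB : forall v v' w1 w2 : Vplus rP, w1 != w2 -> hasseE rP v w1 -> hasseE rP v w2 ->
    hasseE rP v' w1 -> hasseE rP v' w2 -> v = v'.
  move=> v v' w1 w2 ne c1 c2 c1' c2'; apply: val_inj.
  by apply: (lattice_uniq (w1 := val w1) (w2 := val w2)).
have HCX : forall v w : Vplus rP, hasseE rP v w -> hasseRk rP v = (hasseRk rP w).+1.
  by move=> v w c; apply: hrP.1.
have HCY : forall v w : Vplus rQ, hasseE rQ v w -> hasseRk rQ v = (hasseRk rQ w).+1.
  by move=> v w c; apply: hrQ.1.
pose X2 := {x : P | (2 <= rP x)%N}.
pose Y2 := {y : Q | (2 <= rQ y)%N}.
pose toX (x : X2) : Vplus rP := exist _ (val x) (leq_trans (isT : (1 <= 2)%N) (valP x)).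
pose toY (y : Y2) : Vplus rQ := exist _ (val y) (leq_trans (isT : (1 <= 2)%N) (valP y)).
have exf : forall x : X2, exists y : Y2, M phi (toX x) (toY y) != 0%R.
  move=> x; have [u [c [cn hc]]] := M_mono GI HA HB (v0 := toX x) (valP x).
  have hu : M phi (toX x) u != 0%R by rewrite hc eqxx GRing.mulr1.
  have ru := M_rank GI hu.
  have p : (2 <= rQ (val u))%N by move: ru; rewrite /hasseRk /= => ->; exact: valP x.
  exists (exist _ (val u) p).
  by have -> : toY (exist _ (val u) p) = u by apply: val_inj.
have exg : forall y : Y2, exists x : X2, M phi (toX x) (toY y) != 0%R.
  move=> y; have [v hv] := M_hit GI (toY y).
  have rv := M_rank GI hv.
  have p : (2 <= rP (val v))%N by move: rv; rewrite /hasseRk /= => <-; exact: valP y.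
  exists (exist _ (val v) p).
  by have -> : toX (exist _ (val v) p) = v by apply: val_inj.
pose f (x : X2) : Y2 := xchoose (exf x).
pose g (y : Y2) : X2 := xchoose (exg y).
have hf : forall x, M phi (toX x) (toY (f x)) != 0%R by move=> x; exact: xchooseP (exf x).
have hg : forall y, M phi (toX (g y)) (toY y) != 0%R by move=> y; exact: xchooseP (exg y).
have fK : cancel f g.
  move=> x; have E := M_inj_pair GI HA HB (v := toX (g (f x))) (v' := toX x) (valP (g (f x))) (valP x) (hg (f x)) (hf x).
  by apply: val_inj; have := congr1 val E.
have gK : cancel g f.
  move=> y; have [c [cn hc]] := M_val GI HA HB (v := toX (g y)) (valP (g y)) (hg y).
  have := hf (g y); rewrite hc; case: (eqVneq (toY (f (g y))) (toY y)) => [E _|ne]; last by rewrite /= GRing.mulr0n GRing.mulr0 eqxx.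
  by apply: val_inj; have := congr1 val E.
have fc : forall x x' : X2, covers (val x) (val x') -> covers (val (f x)) (val (f x')).
  move=> x x' c.
  exact: (cover_fw GI HA HB (v := toX x) (w := toX x') (valP x) (valP x') (hf x) (hf x') c).
have gc : forall y y' : Y2, covers (val y) (val y') -> covers (val (g y)) (val (g y')).
  move=> y y' c.
  exact: (cover_bw GI HA HB HCX HCY (v := toX (g y)) (w := toX (g y')) (u := toY y) (u' := toY y')
            (valP (g y)) (valP (g y')) (hg y) (hg y') c).
exists f; split; first by exists g.
move=> x y; apply/idP/idP => h.
  exact: (ord_mono hrP.1 fc).
have := ord_mono hrQ.1 gc h; by rewrite !fK.
Qed.
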